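(* Let $\mathcal A_+,\mathcal A_-\subseteq\mathbb Z^n$ be disjoint nonempty finite sets, $\mathcal A=\mathcal A_+\cup\mathcal A_-$, such that $\mathcal A_-\subseteq\operatorname{relint}(\Gamma)$ for a face $\Gamma$ of $\operatorname{conv}(\mathcal A_+)$ and $(\mathcal A_+\cap\Gamma,\mathcal A_-\cap\Gamma)$ is nonseparable. Let $f\in\mathcal S(\mathcal A_+,\mathcal A_-)$ have nonsigned coefficients $c\in\mathbb R^{\mathcal A}_{>0}$ and let $h:\mathcal A\to\mathbb Z$ be a height function lifting $\mathcal A_-$. Then the set $S:=\{t\in\mathbb R_{>0}:F^\Gamma(\pi_\Gamma(c\star t^h),x)=0\text{ for some }x\in\mathbb R^n_{>0}\}$ has exactly one element.
   Context: A signomial with signed support $(\mathcal A_+,\mathcal A_-)$ is $f_c(x)=\sum_{a\in\mathcal A_+}c_ax^a-\sum_{b\in\mathcal A_-}c_bx^b$ on $\mathbb R^n_{>0}$, $c\in\mathbb R^{\mathcal A}_{>0}$ (nonsigned coefficients); $\mathcal S(\mathcal A_+,\mathcal A_-)$ is the set of these. For a signed support $(\mathcal B_+,\mathcal B_-)$ the critical system is $F(c,x)=(f_c(x),x_1\partial_{x_1}f_c(x),\dots,x_n\partial_{x_n}f_c(x))$. $\pi_\Gamma:\mathbb R^{\mathcal A}\to\mathbb R^{\mathcal A\cap\Gamma}$ is the coordinate projection and $F^\Gamma$ the critical system of $(\mathcal A_+\cap\Gamma,\mathcal A_-\cap\Gamma)$. A height function $h$ lifts $\mathcal A_-$ if $h(a)>0$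 for $a\in\mathcal A_-$, $h(a)=0$ for $a\in\mathcal A_+$; $c\star t^h=(c_at^{h(a)})_a$. For $(\mathcal B_+,\mathcal B_-)$ of dimension $d=\dim\operatorname{conv}(\mathcal B_+\cup\mathcal B_-)$: $\mathcal F(\mathcal B_+)$ is the common refinement of all regular polyhedral subdivisions of $\mathcal B_+$, $\mathcal F_d(\mathcal B_+)$ its $d$-cells, and $(\mathcal B_+,\mathcal B_-)$ is nonseparable if $\mathcal B_-\subseteq\operatorname{relint}\operatorname{conv}(\mathcal B_+)$ and some $D\in\mathcal F_d(\mathcal B_+)$ contains $\mathcal B_-$. *)

(* Defs.v *)
From HB Require Import structures.
From mathcomp Require Import all_boot all_order all_algebra.
From mathcomp Require Import all_classical all_reals all_analysis.
From mathcomp Require Import finmap.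

Set Implicit Arguments.
Unset Strict Implicit.
Unset Printing Implicit Defensive.

Import Order.TTheory GRing.Theory Num.Theory.
Local Open Scope classical_set_scope.
Local Open Scope fset_scope.
Local Open Scope ring_scope.

Section Defs.
Variables (R : realType) (n : nat).

Definition vR (a : 'rV[int]_n) : 'rV[R]_n := map_mx (fun z : int => z%:~R) a.

Definition dotR (w x : 'rV[R]_n) : R := \sum_(i < n) w 0 i * x 0 i.
Definition sqdist (x y : 'rV[R]_n) : R := \sum_(i < n) (x 0 i - y 0 i) ^+ 2.

Definition posvec (x : 'rV[R]_n) : Prop := forall i, 0 < x 0 i.

Definition monom (a : 'rV[int]_n) (x : 'rV[R]_n) : R := \prod_(i < n) x 0 i ^ a 0 i.

(* signomial with signed support (Bp, Bm) and nonsigned coefficients c *)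
Definition signomial (Bp Bm : {fset 'rV[int]_n}) (c : 'rV[int]_n -> R)
  (x : 'rV[R]_n) : R :=
  \sum_(a <- Bp) c a * monom a x - \sum_(b <- Bm) c b * monom b x.

(* the critical system F(c,x) = (f_c(x), x_1 d_1 f_c(x), ..., x_n d_n f_c(x)),
   indexed by 'I_n.+1: index 0 is f_c, index i.+1 is x_i d_{x_i} f_c *)
Definition crit_system (Bp Bm : {fset 'rV[int]_n}) (c : 'rV[int]_n -> R)
  (x : 'rV[R]_n) : 'I_n.+1 -> R :=
  fun k => match unlift ord0 k with
           | None => signomial Bp Bm c x
           | Some i => x 0 i * derive (signomial Bp Bm c) x (delta_mx 0 i)
           end.

Definition cvx_hull (B : {fset 'rV[int]_n}) : set 'rV[R]_n :=
  [set x | exists l : 'rV[int]_n -> R,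
     (forall b, b \in B -> 0 <= l b) /\ \sum_(b <- B) l b = 1 /\
     x = \sum_(b <- B) l b *: vR b].

Definition is_face_of (P G : set 'rV[R]_n) : Prop :=
  exists w : 'rV[R]_n, G = [set x | P x /\ forall y, P y -> dotR w y <= dotR w x].

Definition aff_hull (S : set 'rV[R]_n) : set 'rV[R]_n :=
  [set x | exists (k : nat) (p : 'I_k -> 'rV[R]_n) (l : 'I_k -> R),
     (forall i, S (p i)) /\ \sum_(i < k) l i = 1 /\ x = \sum_(i < k) l i *: p i].

Definition rel_int (S : set 'rV[R]_n) : set 'rV[R]_n :=
  [set x | S x /\ exists e : R, 0 < e /\
     forall y, aff_hull S y -> sqdist y x < e ^+ 2 -> S y].

Definition aff_indep (k : nat) (p : 'I_k.+1 -> 'rV[R]_n) : bool :=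
  row_free (\matrix_(i < k) (p (lift ord0 i) - p ord0)).

Definition has_aff_indep (S : set 'rV[R]_n) (k : nat) : Prop :=
  exists p : 'I_k.+1 -> 'rV[R]_n, (forall i, S (p i)) /\ aff_indep p.

Definition dim_is (S : set 'rV[R]_n) (d : nat) : Prop :=
  has_aff_indep S d /\ ~ has_aff_indep S d.+1.

(* cells (of all dimensions) of the regular polyhedral subdivision of B induced
   by the height function om : lower faces of the lifted configuration,
   i.e. cvx_hull of the points minimizing om(b) - <w,b> for some w *)
Definition reg_cell (B : {fset 'rV[int]_n}) (om : 'rV[int]_n -> R)
  (C : set 'rV[R]_n) : Prop :=
  exists w : 'rV[R]_n,
    C = cvx_hull [fset b in B | `[< forall b', b' \in B ->
                   om b - dotR w (vR b) <= om b' - dotR w (vR b') >]].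

(* cells of the common refinement F(B) of all regular polyhedral subdivisions
   of B: nonempty intersections of one cell from each regular subdivision *)
Definition refin_cell (B : {fset 'rV[int]_n}) (D : set 'rV[R]_n) : Prop :=
  exists sigma : ('rV[int]_n -> R) -> set 'rV[R]_n,
    (forall om, reg_cell B om (sigma om)) /\
    D = [set x | forall om, sigma om x] /\ D !=set0.

Definition nonseparable (Bp Bm : {fset 'rV[int]_n}) : Prop :=
  (forall b, b \in Bm -> rel_int (cvx_hull Bp) (vR b)) /\
  exists d : nat, dim_is (cvx_hull (fsetU Bp Bm)) d /\
    exists D, refin_cell Bp D /\ dim_is D d /\ (forall b, b \in Bm -> D (vR b)).

Definition restr_supp (A : {fset 'rV[int]_n}) (G : set 'rV[R]_n) : {fset 'rV[int]_n} :=
  [fset a in A | `[< G (vR a) >]].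

Definition lifts_neg (Ap Am : {fset 'rV[int]_n}) (h : 'rV[int]_n -> int) : Prop :=
  (forall a, a \in Am -> 0 < h a) /\ (forall a, a \in Ap -> h a = 0).

Definition coef_star (c : 'rV[int]_n -> R) (t : R) (h : 'rV[int]_n -> int) :
  'rV[int]_n -> R := fun a => c a * t ^ h a.

Definition coef_proj (A : {fset 'rV[int]_n}) (c : 'rV[int]_n -> R) : 'rV[int]_n -> R :=
  fun a => if a \in A then c a else 0.

End Defs.

Arguments vR {R n} a.
Arguments cvx_hull {R n} B _.

(* Main.v *)
Require Import Defs.
From HB Require Import structures.
From mathcomp Require Import all_boot all_order all_algebra.
From mathcomp Require Import all_classical all_reals all_analysis.
From mathcomp Require Import finmap.
From mathcomp Require Import ring lra.
Import Order.TTheory GRing.Theory Num.Theory.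
Set Implicit Arguments.
Unset Strict Implicit.
Unset Printing Implicit Defensive.
Local Open Scope classical_set_scope.
Local Open Scope ring_scope.
Section P1.
Variables (R : realType) (n : nat).
Implicit Types (a b : 'rV[int]_n) (w x y z : 'rV[R]_n).

Lemma vRE a j : vR a 0 j = (a 0 j)%:~R :> R.
Proof. by rewrite /vR mxE. Qed.

Lemma dotRDr w x y : dotR w (x + y) = dotR w x + dotR w y.
Proof. by rewrite /dotR -big_split /=; apply: eq_bigr => i _; rewrite mxE mulrDr. Qed.

Lemma dotRBr w x y : dotR w (x - y) = dotR w x - dotR w y.
Proof.
rewrite /dotR -sumrB /=; apply: eq_bigr => i _; rewrite !mxE mulrBr //.
Qed.

Lemma dotRZr w k x : dotR w (k *: x) = k * dotR w x.
Proof. by rewrite /dotR mulr_sumr; apply: eq_bigr => i _; rewrite mxE mulrCA. Qed.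

Lemma dotRC w x : dotR w x = dotR x w.
Proof. by rewrite /dotR; apply: eq_bigr => i _; rewrite mulrC. Qed.

Lemma dotR0r w : dotR w 0 = 0.
Proof. by rewrite /dotR big1 // => i _; rewrite mxE mulr0. Qed.

Lemma dotR_sumr (T : Type) (s : seq T) (F : T -> 'rV[R]_n) w :
  dotR w (\sum_(i <- s) F i) = \sum_(i <- s) dotR w (F i).
Proof.
elim: s => [|u s IH]; first by rewrite !big_nil dotR0r.
by rewrite !big_cons dotRDr IH.
Qed.

Definition lnv x : 'rV[R]_n := \row_j ln (x 0 j).
Definition expv z : 'rV[R]_n := \row_j expR (z 0 j).

Lemma expv_pos z : posvec (expv z).
Proof. by move=> i; rewrite mxE expR_gt0. Qed.

Lemma lnvK x : posvec x -> expv (lnv x) = x.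
Proof. by move=> px; apply/rowP => j; rewrite !mxE lnK // posrE. Qed.

Lemma expvK z : lnv (expv z) = z.
Proof. by apply/rowP => j; rewrite !mxE expRK. Qed.

Lemma expR_int (y : R) (k : int) : 0 < y -> expR (k%:~R * ln y) = y ^ k.
Proof.
move=> y0; case: k => m.
  by rewrite -[(Posz m)%:~R]/(m%:R) expRM_natl lnK ?posrE.
by rewrite NegzE -[(- (Posz m.+1))%:~R]/(- (m.+1)%:R) mulNr expRN expRM_natl lnK ?posrE.
Qed.

Lemma monom_exp a x : posvec x -> monom a x = expR (dotR (vR a) (lnv x)).
Proof.
move=> px; rewrite /monom /dotR expR_sum; apply: eq_bigr => i _.
by rewrite vRE mxE expR_int.
Qed.

Lemma monom_expv a z : monom a (expv z) = expR (dotR (vR a) z).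
Proof. by rewrite monom_exp ?expvK //; exact: expv_pos. Qed.

Lemma monom_gt0 a x : posvec x -> 0 < monom a x.
Proof. by move=> px; rewrite monom_exp // expR_gt0. Qed.

Lemma jensen_exp (T : eqType) (s : seq T) (l y : T -> R) :
  (forall i, i \in s -> 0 <= l i) -> \sum_(i <- s) l i = 1 ->
  expR (\sum_(i <- s) l i * y i) <= \sum_(i <- s) l i * expR (y i).
Proof.
move=> l0 l1; set mu := \sum_(i <- s) l i * y i.
have H i : i \in s -> l i * (expR mu * (1 + (y i - mu))) <= l i * expR (y i).
  move=> si; apply: ler_wpM2l; first exact: l0.
  have H1 := expR_ge1Dx (y i - mu).
  have H2 : expR mu * (1 + (y i - mu)) <= expR mu * expR (y i - mu).
    by rewrite ler_pM2l ?expR_gt0.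
  by rewrite -expRD (_ : mu + (y i - mu) = y i) in H2; last by ring.
have E : \sum_(i <- s) l i * (expR mu * (1 + (y i - mu))) = expR mu.
  have -> : \sum_(i <- s) l i * (expR mu * (1 + (y i - mu))) =
     expR mu * (\sum_(i <- s) l i + (\sum_(i <- s) l i * y i - mu * \sum_(i <- s) l i)).
    rewrite mulr_sumr -sumrB -big_split /= mulr_sumr.
    by apply: eq_bigr => i _; ring.
  by rewrite l1 -/mu mulr1 subrr addr0 mulr1.
rewrite -E.
by rewrite big_seq_cond [X in _ <= X]big_seq_cond; apply: ler_sum => i /andP[si _]; exact: H.
Qed.

End P1.
Section P2.
Variables (R : realType) (n : nat).
Local Open Scope fset_scope.
Local Open Scope ring_scope.
Implicit Types (a b : 'rV[int]_n) (w x y z : 'rV[R]_n).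

Lemma sum_fset0 (F : 'rV[int]_n -> R) : \sum_(b <- (fset0 : {fset 'rV[int]_n})) F b = 0.
Proof. by rewrite big_seq_fset0. Qed.

Lemma key_ineq (P N : {fset 'rV[int]_n}) (wt : 'rV[int]_n -> R) :
  (forall a, a \in P -> 0 <= wt a) -> (forall b, b \in N -> 0 <= wt b) ->
  \sum_(a <- P) wt a = \sum_(b <- N) wt b ->
  (forall u, \sum_(a <- P) wt a * dotR u (vR a) = \sum_(b <- N) wt b * dotR u (vR b)) ->
  (forall om : 'rV[int]_n -> R, exists w', forall b, b \in N ->
     @cvx_hull R n [fset a in P | `[< forall a', a' \in P ->
        om a - dotR w' (vR a) <= om a' - dotR w' (vR a') >]] (vR b)) ->
  forall z, \sum_(b <- N) wt b * expR (dotR (vR b) z)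
         <= \sum_(a <- P) wt a * expR (dotR (vR a) z).
Proof.
move=> wP wN m0 m1 Hcell z.
have [w' Hw] := Hcell (fun a => expR (dotR (vR a) z)).
set om := (fun a => expR (dotR (vR a) z)) in Hw.
set S := [fset a in P | _] in Hw.
have sumP0 : 0 <= \sum_(a <- P) wt a * expR (dotR (vR a) z).
  rewrite big_seq; apply: sumr_ge0 => a aP; apply: mulr_ge0; first exact: wP.
  exact: ltW (expR_gt0 _).
case: (N =P fset0) => [-> | /eqP /fset0Pn [b0 b0N]]; first by rewrite sum_fset0.
have inS s : s \in S -> s \in P /\ forall a', a' \in P ->
     om s - dotR w' (vR s) <= om a' - dotR w' (vR a').
  by rewrite !inE /= => /andP[sP /asboolP H].
have [s0 s0S] : exists s0, s0 \in S.
  have [l [l0 [l1 _]]] := Hw b0 b0N.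
  case: (S =P fset0) => [S0 | /eqP /fset0Pn //].
  by move: l1; rewrite S0 sum_fset0 => /esym/eqP; rewrite oner_eq0.
have [s0P s0min] := inS s0 s0S.
pose al := om s0 - dotR w' (vR s0).
have cA a : a \in P -> al + dotR w' (vR a) <= om a.
  by move=> aP; have := s0min a aP; rewrite /al lerBrDr.
have cB s : s \in S -> om s = al + dotR w' (vR s).
  move=> sS; have [sP smin] := inS s sS.
  have h1 := smin s0 s0P; have h2 := s0min s sP.
  rewrite /al; lra.
have cC b : b \in N -> expR (dotR (vR b) z) <= al + dotR w' (vR b).
  move=> bN; have [l [l0 [l1 ->]]] := Hw b bN.
  rewrite dotRC dotR_sumr.
  under eq_bigr => s _ do rewrite dotRZr dotRC.
  apply: le_trans (@jensen_exp R _ S l (fun s => dotR (vR s) z) l0 l1) _.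
  rewrite dotR_sumr.
  under [X in _ <= _ + X]eq_bigr => s _ do rewrite dotRZr.
  rewrite -[al]mulr1 -l1 mulr_sumr -big_split /=.
  rewrite big_seq [X in _ <= X]big_seq; apply: ler_sum => s sS.
  rewrite -/(om s) (cB s sS).
  by rewrite [X in _ <= X](_ : _ = l s * (al + dotR w' (vR s))) //; ring.
apply: le_trans (_ : \sum_(b <- N) wt b * (al + dotR w' (vR b)) <= _).
  rewrite big_seq [X in _ <= X]big_seq; apply: ler_sum => b bN.
  by apply: ler_wpM2l; [exact: wN | exact: cC].
have -> : \sum_(b <- N) wt b * (al + dotR w' (vR b)) =
          \sum_(a <- P) wt a * (al + dotR w' (vR a)).
  under eq_bigr => b _ do rewrite mulrDr.
  under [in RHS]eq_bigr => b _ do rewrite mulrDr.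
  by rewrite !big_split /= -!mulr_suml -m0 m1.
rewrite big_seq [X in _ <= X]big_seq; apply: ler_sum => a aP.
by apply: ler_wpM2l; [exact: wP | exact: cA].
Qed.

End P2.
Section P3.
Variables (R : realType) (n : nat).
Local Open Scope fset_scope.
Local Open Scope ring_scope.
Implicit Types (a b : 'rV[int]_n) (w x y z : 'rV[R]_n).

Lemma line_eq (f : 'rV[R]_n -> R) x v (t : R) :
  (fun h : R => h^-1 *: ((f \o shift (t *: v + x)) (h *: v) - f (t *: v + x))) =
  (fun h : R => h^-1 *: (((fun s : R => f (s *: v + x)) \o shift t) (h *: (1:R)) -
                         (fun s : R => f (s *: v + x)) t)).
Proof.
apply/funext => h /=; congr (_ *: (f _ - _)).
by rewrite /shift /= [h *: (1:R)]mulr1 scalerDl addrA.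
Qed.

Lemma line_derivable (f : 'rV[R]_n -> R) x v (t : R) :
  derivable f (t *: v + x) v <-> derivable (fun s : R => f (s *: v + x)) t 1.
Proof. by rewrite /derivable line_eq. Qed.

Lemma line_derive (f : 'rV[R]_n -> R) x v (t : R) :
  derive f (t *: v + x) v = derive (fun s : R => f (s *: v + x)) t 1.
Proof. by rewrite /derive line_eq. Qed.

Lemma line_is_derive (f : 'rV[R]_n -> R) x (v : 'rV[R]_n) (d : R) :
  is_derive (0:R) (1:R) (fun s : R => f (s *: v + x)) d -> is_derive x v f d.
Proof.
move=> [H1 H2]; have E : x = 0 *: v + x by rewrite scale0r add0r.
split; first by rewrite E line_derivable.
by rewrite E line_derive.
Qed.

Lemma deriv_pow (y : R) (k : int) : 0 < y ->
  exists d : R, is_derive (0:R) (1:R) (fun h : R => (y + h) ^ k) d /\ y * d = k%:~R * y ^ k.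
Proof.
move=> y0.
have sc (k0 u : R) : k0 *: u = k0 * u by [].
have Hs : is_derive (0:R) 1 (shift y) 1 := is_derive_shift 0 1 y.
case: k => m.
  have := is_deriveX m Hs.
  have -> : (shift y ^+ m) = (fun h : R => (y + h) ^ Posz m).
    by apply/funext => h; rewrite exprfctE /shift /= addrC.
  move=> H; eexists; split; first exact: H.
  rewrite /shift /= add0r sc mulr1; case: m {H} => [|m].
    by rewrite mulr0n !mul0r mulr0.
  change (y * (m.+1%:R * y ^+ m) = m.+1%:R * (y ^+ m.+1)); rewrite exprS; ring.
have Hx := is_deriveX m.+1 Hs.
have nz : (shift y ^+ m.+1) 0 != 0.
  by rewrite exprfctE /shift /= add0r expf_neq0 // gt_eqF.
have -> : (fun h : R => (y + h) ^ Negz m) = (fun h => ((shift y ^+ m.+1) h)^-1).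
  by apply/funext => h; rewrite exprfctE /shift /= addrC.
exists (- ((shift y ^+ m.+1) 0) ^- 2 *: derive (shift y ^+ m.+1) 0 1).
split.
  split; first by apply: derivableV => //; exact: ex_derive.
  by rewrite deriveV //; exact: ex_derive.
rewrite derive_val exprfctE /shift /= add0r !sc mulr1.
have yn : y != 0 by rewrite gt_eqF.
change (y * (- (y ^+ m.+1) ^- 2 * (m.+1%:R * y ^+ m)) = - (m.+1%:R) * (y ^+ m.+1)^-1).
have Yn : y ^+ m != 0 by rewrite expf_neq0.
rewrite (exprS y m); move: (y ^+ m) Yn => Y Yn; field; rewrite ?mulf_neq0 ?Yn ?yn //.
Qed.


Lemma deriv_monom a x i : posvec x ->
  exists d : R, is_derive (0:R) (1:R) (fun h : R => monom a (h *: delta_mx 0 i + x)) d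
    /\ x 0 i * d = (a 0 i)%:~R * monom a x.
Proof.
move=> px.
have sc (k0 u : R) : k0 *: u = k0 * u by [].
set M := \prod_(j < n | j != i) x 0 j ^ a 0 j.
have E : (fun h : R => monom a (h *: delta_mx 0 i + x)) =
         (fun h : R => M * (x 0 i + h) ^ a 0 i).
  apply/funext => h; rewrite /monom (bigD1 i) //= mulrC; congr (_ * _).
    by apply: eq_bigr => j ji; rewrite !mxE eqxx /= (negbTE ji) mulr0 add0r.
  by rewrite !mxE !eqxx /= mulr1 addrC.
have Em : monom a x = M * x 0 i ^ a 0 i.
  have := congr1 (fun f => f 0) E; rewrite /= scale0r add0r addr0 => ->.
  by [].
have [d0 [Hd0 Ed0]] := deriv_pow (a 0 i) (px i).
have E2 : (fun h : R => M * (x 0 i + h) ^ a 0 i) = M \*: (fun h : R => (x 0 i + h) ^ a 0 i).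
  by apply/funext => h.
exists (M *: d0); split; first by rewrite E E2; exact: is_deriveZ.
by rewrite sc mulrCA Ed0 Em; ring.
Qed.

Lemma deriv_sum (s : seq 'rV[int]_n) (F : 'rV[int]_n -> R -> R) (G : 'rV[int]_n -> R) (y : R) :
  (forall a, a \in s -> exists d : R, is_derive (0:R) (1:R) (F a) d /\ y * d = G a) ->
  exists d : R, is_derive (0:R) (1:R) (fun h : R => \sum_(a <- s) F a h) d /\
     y * d = \sum_(a <- s) G a.
Proof.
elim: s => [|u s IH] H.
  exists 0; split; last by rewrite big_nil mulr0.
  have -> : (fun h : R => \sum_(a <- [::]) F a h) = cst 0.
    by apply/funext => h; rewrite big_nil.
  exact: is_derive_cst.
have [d1 [H1 E1]] := H u (mem_head _ _).
have [d2 [H2 E2]] : exists d : R, is_derive (0:R) (1:R) (fun h : R => \sum_(a <- s) F a h) d /\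
     y * d = \sum_(a <- s) G a.
  by apply: IH => a ai; apply: H; rewrite inE ai orbT.
exists (d1 + d2); split.
  have -> : (fun h : R => \sum_(a <- (u :: s)) F a h) = F u + (fun h : R => \sum_(a <- s) F a h).
    by apply/funext => h; rewrite big_cons.
  exact: is_deriveD.
by rewrite big_cons mulrDr E1 E2.
Qed.

Lemma deriv_sig (P N : {fset 'rV[int]_n}) (C : 'rV[int]_n -> R) x i : posvec x ->
  exists d : R, is_derive x (delta_mx 0 i) (signomial P N C) d /\
   x 0 i * d = \sum_(a <- P) C a * ((a 0 i)%:~R * monom a x)
             - \sum_(b <- N) C b * ((b 0 i)%:~R * monom b x).
Proof.
move=> px.
have sc (k0 u : R) : k0 *: u = k0 * u by [].
have T (Q : {fset 'rV[int]_n}) : exists d : R, is_derive (0:R) (1:R)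
    (fun h : R => \sum_(a <- Q) C a * monom a (h *: delta_mx 0 i + x)) d /\
    x 0 i * d = \sum_(a <- Q) C a * ((a 0 i)%:~R * monom a x).
  apply: (@deriv_sum Q (fun a h => C a * monom a (h *: delta_mx 0 i + x)) (fun a => C a * ((a 0 i)%:~R * monom a x))) => a _.
  have [d [Hd Ed]] := deriv_monom a i px.
  exists (C a *: d); split.
    have -> : (fun h : R => C a * monom a (h *: delta_mx 0 i + x)) =
       C a \*: (fun h : R => monom a (h *: delta_mx 0 i + x)) by apply/funext.
    exact: is_deriveZ.
  by rewrite sc mulrCA Ed.
have [d1 [H1 E1]] := T P; have [d2 [H2 E2]] := T N.
exists (d1 - d2); split; last by rewrite mulrBr E1 E2.
apply: line_is_derive.
Qed.

End P3.
Section P4.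
Variables (R : realType) (n : nat).
Local Open Scope fset_scope.
Local Open Scope ring_scope.
Implicit Types (a b : 'rV[int]_n) (w x y z : 'rV[R]_n).

Lemma crit_mass (P N : {fset 'rV[int]_n}) (C : 'rV[int]_n -> R) x :
  posvec x -> crit_system P N C x = (fun _ => 0) ->
  \sum_(a <- P) C a * monom a x = \sum_(b <- N) C b * monom b x /\
  forall i, \sum_(a <- P) C a * ((a 0 i)%:~R * monom a x) =
            \sum_(b <- N) C b * ((b 0 i)%:~R * monom b x).
Proof.
move=> px Hc; split.
  have := congr1 (fun f => f ord0) Hc; rewrite /crit_system unlift_none /signomial.
  by move/eqP; rewrite subr_eq0 => /eqP.
move=> i; have := congr1 (fun f => f (lift ord0 i)) Hc.
rewrite /crit_system liftK /=.
have [d [Hd Ed]] := deriv_sig P N C i px.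
by rewrite derive_val Ed => /eqP; rewrite subr_eq0 => /eqP.
Qed.

Lemma sum_lt (N : {fset 'rV[int]_n}) (F G : 'rV[int]_n -> R) :
  N != fset0 -> (forall b, b \in N -> F b < G b) ->
  \sum_(b <- N) F b < \sum_(b <- N) G b.
Proof.
move=> /fset0Pn [b0 b0N] H.
rewrite (big_fsetD1 b0 b0N) [X in _ < X](big_fsetD1 b0 b0N) /=.
apply: ltr_leD; first exact: H.
rewrite big_seq [X in _ <= X]big_seq; apply: ler_sum => b.
by rewrite !inE => /andP[_ bN]; apply: ltW; apply: H.
Qed.

Lemma monom_shift a x1 x2 : posvec x1 -> posvec x2 ->
  monom a x2 * expR (dotR (vR a) (lnv x1 - lnv x2)) = monom a x1.
Proof.
move=> p1 p2; rewrite !monom_exp // -expRD dotRBr.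
by congr expR; ring.
Qed.

Lemma uniq_crit (P N : {fset 'rV[int]_n}) (C1 C2 : 'rV[int]_n -> R) x1 x2 :
  N != fset0 ->
  (forall a, a \in P -> 0 < C2 a) -> (forall b, b \in N -> 0 < C1 b) ->
  (forall a, a \in P -> C1 a = C2 a) -> (forall b, b \in N -> C1 b < C2 b) ->
  (forall om : 'rV[int]_n -> R, exists w', forall b, b \in N ->
     @cvx_hull R n [fset a in P | `[< forall a', a' \in P ->
        om a - dotR w' (vR a) <= om a' - dotR w' (vR a') >]] (vR b)) ->
  posvec x1 -> crit_system P N C1 x1 = (fun _ => 0) ->
  posvec x2 -> crit_system P N C2 x2 = (fun _ => 0) -> False.
Proof.
move=> N0 C2P C1N C12P C12N Hcell p1 H1 p2 H2.
have [m10 _] := crit_mass p1 H1.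
have [m20 m2i] := crit_mass p2 H2.
pose wt a := C2 a * monom a x2.
have K := @key_ineq R n P N wt.
have wP a : a \in P -> 0 <= wt a.
  by move=> aP; apply: mulr_ge0; [exact: ltW (C2P a aP) | exact: ltW (monom_gt0 a p2)].
have wN b : b \in N -> 0 <= wt b.
  by move=> bN; apply: mulr_ge0; [exact: ltW (lt_trans (C1N b bN) (C12N b bN)) | exact: ltW (monom_gt0 b p2)].
have mu u : \sum_(a <- P) wt a * dotR u (vR a) = \sum_(b <- N) wt b * dotR u (vR b).
  rewrite /dotR.
  have E (Q : {fset 'rV[int]_n}) : \sum_(a <- Q) wt a * (\sum_(i < n) u 0 i * vR a 0 i) =
     \sum_(i < n) u 0 i * \sum_(a <- Q) C2 a * ((a 0 i)%:~R * monom a x2).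
    under eq_bigr => a _ do rewrite mulr_sumr.
    rewrite exchange_big /=; apply: eq_bigr => i _; rewrite mulr_sumr.
    by apply: eq_bigr => a _; rewrite vRE /wt; ring.
  rewrite !E; apply: eq_bigr => i _; by rewrite m2i.
have := K wP wN m20 mu Hcell (lnv x1 - lnv x2).
under eq_bigr => b _ do rewrite /wt -mulrA monom_shift //.
under [X in _ <= X]eq_bigr => a _ do rewrite /wt -mulrA monom_shift //.
have -> : \sum_(a <- P) C2 a * monom a x1 = \sum_(a <- P) C1 a * monom a x1.
  by rewrite big_seq [RHS]big_seq; apply: eq_bigr => a aP; rewrite C12P.
rewrite m10; apply/negP; rewrite -ltNge.
apply: sum_lt => // b bN; rewrite ltr_pM2r ?monom_gt0 //; exact: C12N.
Qed.

End P4.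
Section P5a.
Variable (R : realType).
Local Open Scope fset_scope.
Local Open Scope ring_scope.

Lemma seq_argmax (T : eqType) (s : seq T) (u : T -> R) : s != [::] ->
  exists2 a, a \in s & forall a', a' \in s -> u a' <= u a.
Proof.
elim: s => [//|x s IH] _.
case: (s =P [::]) => [-> | /eqP sn].
  by exists x; rewrite ?mem_head // => a'; rewrite inE => /eqP ->.
have [a aS Ha] := IH sn.
case: (leP (u x) (u a)) => H.
  exists a; first by rewrite inE aS orbT.
  by move=> a'; rewrite inE => /orP[/eqP -> // | /Ha].
exists x; first exact: mem_head.
move=> a'; rewrite inE => /orP[/eqP -> // | /Ha H']; exact: le_trans H' (ltW H).
Qed.

Lemma fset_argmax (T : choiceType) (P : {fset T}) (u : T -> R) : P != fset0 ->
  exists2 a, a \in P & forall a', a' \in P -> u a' <= u a.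
Proof.
move=> P0; have : (P : seq T) != [::].
  by apply: contraNneq P0 => H; apply/eqP/fsetP => x; rewrite inE -[x \in P]/(x \in (P : seq T)) H.
move/(seq_argmax u) => [a aP Ha]; exists a => // a' a'P; exact: Ha.
Qed.

Lemma seq_unif (T : eqType) (s : seq T) (Q : T -> R -> Prop) :
  (forall b e e', 0 < e' -> e' <= e -> Q b e -> Q b e') ->
  (forall b, b \in s -> exists2 e, 0 < e & Q b e) ->
  exists2 e, 0 < e & forall b, b \in s -> Q b e.
Proof.
move=> mono; elim: s => [|x s IH] H; first by exists 1.
have [e1 e10 He1] := H x (mem_head _ _).
have [e2 e20 He2] : exists2 e, 0 < e & forall b, b \in s -> Q b e.
  by apply: IH => b bs; apply: H; rewrite inE bs orbT.
exists (Num.min e1 e2); first by rewrite lt_min e10 e20.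
move=> b; rewrite inE => /orP[/eqP -> | bs].
  by apply: mono He1; rewrite ?lt_min ?e10 ?e20 ?ge_min ?lexx.
by apply: mono (He2 b bs); rewrite ?lt_min ?e10 ?e20 ?ge_min ?lexx ?orbT.
Qed.

Lemma fset_unif (T : choiceType) (P : {fset T}) (Q : T -> R -> Prop) :
  (forall b e e', 0 < e' -> e' <= e -> Q b e -> Q b e') ->
  (forall b, b \in P -> exists2 e, 0 < e & Q b e) ->
  exists2 e, 0 < e & forall b, b \in P -> Q b e.
Proof. by move=> mono H; apply: (@seq_unif _ P Q mono) => b bP; exact: H. Qed.

Lemma conv_le_max (T : eqType) (s : seq T) (l u : T -> R) (M : R) :
  (forall a, a \in s -> 0 <= l a) -> \sum_(a <- s) l a = 1 ->
  (forall a, a \in s -> u a <= M) -> \sum_(a <- s) l a * u a <= M.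
Proof.
move=> l0 l1 uM; rewrite -[M]mul1r -l1 mulr_suml.
rewrite big_seq [X in _ <= X]big_seq; apply: ler_sum => a aS.
by apply: ler_wpM2l; [exact: l0 | exact: uM].
Qed.

Lemma term_le_sum (T : choiceType) (P : {fset T}) (F : T -> R) a :
  (forall b, b \in P -> 0 <= F b) -> a \in P -> F a <= \sum_(b <- P) F b.
Proof.
move=> F0 aP; rewrite (big_fsetD1 a aP) /= lerDl big_seq.
by apply: sumr_ge0 => b; rewrite !inE => /andP[_ /F0].
Qed.

End P5a.
Section P5b.
Variables (R : realType) (n : nat).
Local Open Scope fset_scope.
Local Open Scope ring_scope.
Implicit Types (a b : 'rV[int]_n) (w x y z : 'rV[R]_n).

Lemma pt_in_hull (P : {fset 'rV[int]_n}) a : a \in P -> @cvx_hull R n P (vR a).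
Proof.
move=> aP; exists (fun a' => (a' == a)%:R); split.
  by move=> b _; rewrite ler0n.
split.
  rewrite (big_fsetD1 a aP) /= eqxx big_seq big1 ?addr0 //.
  by move=> b; rewrite !inE => /andP[/negbTE -> _].
rewrite (big_fsetD1 a aP) /= eqxx scale1r big_seq big1 ?addr0 //.
by move=> b; rewrite !inE => /andP[/negbTE -> _]; rewrite scale0r.
Qed.

Lemma relint_bound (P : {fset 'rV[int]_n}) b :
  rel_int (@cvx_hull R n P) (vR b) ->
  exists2 eps : R, 0 < eps & forall z a1 a2 (M : R), a1 \in P -> a2 \in P ->
    (forall a, a \in P -> dotR (vR a) z <= M) ->
    dotR (vR b) z + eps * (dotR (vR a1) z - dotR (vR a2) z) <= M.
Proof.
move=> [Hb [e [e0 He]]].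
pose Mq := \sum_(a1 <- P) \sum_(a2 <- P) sqdist (vR a1 : 'rV[R]_n) (vR a2).
have sq0 (u v : 'rV[R]_n) : 0 <= sqdist u v.
  by rewrite /sqdist; apply: sumr_ge0 => i _; exact: sqr_ge0.
have Mq0 : 0 <= Mq by rewrite /Mq big_seq; apply: sumr_ge0 => a _; rewrite big_seq; apply: sumr_ge0.
pose eps := e / (1 + Mq).
have eps0 : 0 < eps by rewrite /eps divr_gt0 //; lra.
exists eps => // z a1 a2 M a1P a2P uM.
pose y := vR b + eps *: (vR a1 - vR a2) : 'rV[R]_n.
have dist : sqdist y (vR b) < e ^+ 2.
  have -> : sqdist y (vR b) = eps ^+ 2 * sqdist (vR a1 : 'rV[R]_n) (vR a2).
    rewrite /sqdist mulr_sumr; apply: eq_bigr => i _; rewrite !mxE; ring.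
  have dM : sqdist (vR a1 : 'rV[R]_n) (vR a2) <= Mq.
    apply: le_trans (_ : \sum_(a2 <- P) sqdist (vR a1 : 'rV[R]_n) (vR a2) <= Mq).
      by apply: (term_le_sum (F := fun a => sqdist (vR a1 : 'rV[R]_n) (vR a))) => // ? _.
    by apply: (term_le_sum (F := fun a => \sum_(a2 <- P) sqdist (vR a : 'rV[R]_n) (vR a2))) => // ? _;
       rewrite big_seq; apply: sumr_ge0.
  have Ee : e = eps * (1 + Mq) by rewrite /eps divfK // gt_eqF //; lra.
  have := sq0 (vR a1) (vR a2); rewrite Ee; move: dM.
  move: (sqdist _ _) => d dM d0.
  have h1 : eps ^+ 2 * d <= eps ^+ 2 * Mq by rewrite ler_pM2l ?exprn_gt0.
  apply: le_lt_trans h1 _.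
  have H : 0 < eps ^+ 2 * (1 + Mq + Mq ^+ 2).
    apply: mulr_gt0; first exact: exprn_gt0.
    have := sqr_ge0 Mq; lra.
  have -> : (eps * (1 + Mq)) ^+ 2 = eps ^+ 2 * Mq + eps ^+ 2 * (1 + Mq + Mq ^+ 2) by ring.
  lra.
have Hy : @cvx_hull R n P y.
  apply: He => //.
  exists 3, (fun i : 'I_3 => match val i with 0 => vR b | 1 => vR a1 | _ => vR a2 end),
            (fun i : 'I_3 => match val i with 0 => 1 | 1 => eps | _ => - eps end).
  split; first by case => -[|[|[|]]] //= _; exact: pt_in_hull.
  split; first by rewrite !big_ord_recl big_ord0 /=; ring.
  rewrite !big_ord_recl big_ord0 /= /y scale1r addr0 scalerBr scaleNr.
  by rewrite addrA.
have [l [l0 [l1 ly]]] := Hy.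
have -> : dotR (vR b) z + eps * (dotR (vR a1) z - dotR (vR a2) z) = dotR z y.
  by rewrite /y dotRDr dotRZr dotRBr !(dotRC z).
rewrite ly dotR_sumr.
under eq_bigr => a _ do rewrite dotRZr.
apply: conv_le_max => // a aP; rewrite dotRC; exact: uM.
Qed.

End P5b.
Import numFieldNormedType.Exports.
Section P6.
Variables (R : realType) (n : nat) (P N : {fset 'rV[int]_n}) (c : 'rV[int]_n -> R)
  (hn : 'rV[int]_n -> nat).
Local Open Scope fset_scope.
Local Open Scope ring_scope.
Implicit Types (a b : 'rV[int]_n) (w x y z : 'rV[R]_n).
Hypothesis cP : forall a, a \in P -> 0 < c a.
Hypothesis cN : forall b, b \in N -> 0 < c b.
Hypothesis hN : forall b, b \in N -> (0 < hn b)%N.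
Hypothesis N0 : N != fset0.
Hypothesis RI : forall b, b \in N -> rel_int (@cvx_hull R n P) (vR b).

Lemma eqle (x y : R) : x = y -> x <= y. Proof. by move->. Qed.

Definition uu a z := dotR (vR a) z.
Definition EE a z := expR (uu a z).
Definition pf z := \sum_(a <- P) c a * EE a z.
Definition rr b z := c b * EE b z / pf z.
Definition psi (t : R) z := \sum_(b <- N) t ^+ hn b * rr b z.

Lemma P0 : P != fset0.
Proof.
have [b0 b0N] := fset0Pn _ N0; have [[l [_ [l1 _]]] _] := RI b0N.
apply/eqP => P0; move: l1; rewrite P0 big_seq_fset0 => /esym/eqP; by rewrite oner_eq0.
Qed.

Lemma EE_gt0 a z : 0 < EE a z.
Proof. exact: expR_gt0. Qed.

Lemma pf_ge a z : a \in P -> c a * EE a z <= pf z.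
Proof.
move=> aP; apply: (term_le_sum (F := fun a => c a * EE a z)) => // b bP.
by apply: mulr_ge0; [exact: ltW (cP bP) | exact: ltW (EE_gt0 _ _)].
Qed.

Lemma pf_gt0 z : 0 < pf z.
Proof.
have [a aP] := fset0Pn _ P0; apply: lt_le_trans (pf_ge z aP).
by apply: mulr_gt0; [exact: cP | exact: EE_gt0].
Qed.

Lemma rr_ge0 b z : b \in N -> 0 <= rr b z.
Proof.
move=> bN; rewrite /rr; apply: divr_ge0; last exact: ltW (pf_gt0 z).
by apply: mulr_ge0; [exact: ltW (cN bN) | exact: ltW (EE_gt0 _ _)].
Qed.

Lemma eps_ex : exists2 eps : R, 0 < eps & forall b, b \in N -> forall z a1 a2 (M : R),
    a1 \in P -> a2 \in P -> uu a2 z <= uu a1 z ->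
    (forall a, a \in P -> uu a z <= M) ->
    uu b z + eps * (uu a1 z - uu a2 z) <= M.
Proof.
pose Q := (fun b (eps : R) => forall z a1 a2 (M : R),
    a1 \in P -> a2 \in P -> uu a2 z <= uu a1 z ->
    (forall a, a \in P -> uu a z <= M) ->
    uu b z + eps * (uu a1 z - uu a2 z) <= M).
have mono : forall b e e', 0 < e' -> e' <= e -> Q b e -> Q b e'.
  move=> b e e' e'0 e'e H z a1 a2 M a1P a2P a21 HM.
  apply: le_trans (H z a1 a2 M a1P a2P a21 HM); rewrite lerD2l.
  by apply: ler_wpM2r => //; rewrite subr_ge0.
have H : forall b, b \in N -> exists2 e, 0 < e & Q b e.
  move=> b bN; have [eps eps0 He] := relint_bound (RI bN).
  by exists eps => // z a1 a2 M a1P a2P _ HM; exact: He.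
have [e e0 He] := fset_unif mono H.
by exists e.
Qed.

Definition epsQ (e : R) := 0 < e /\ forall b, b \in N -> forall z a1 a2 (M : R),
    a1 \in P -> a2 \in P -> uu a2 z <= uu a1 z ->
    (forall a, a \in P -> uu a z <= M) ->
    uu b z + e * (uu a1 z - uu a2 z) <= M.

Definition eps := xget 1 epsQ.

Lemma epsP : epsQ eps.
Proof. apply: xgetPex; have [e e0 He] := eps_ex; by exists e. Qed.

Definition cminQ (e : R) := 0 < e /\ forall a, a \in P -> e <= c a.
Definition cmin := xget 1 cminQ.

Lemma cminP : cminQ cmin.
Proof.
apply: xgetPex.
have [e e0 He] := @fset_unif R _ P (fun a e => e <= c a)
  (fun a e e' _ h1 h2 => le_trans h1 h2) (fun a aP => ex_intro2 _ _ (c a) (cP aP) (lexx _)).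
by exists e.
Qed.

Lemma ratio_bound z : exists D : R, [/\ 0 <= D,
   (forall a a', a \in P -> a' \in P -> uu a z - uu a' z <= D) &
   forall b, b \in N -> rr b z <= c b / cmin * expR (- (eps * D))].
Proof.
have [amax amaxP Hmax] := fset_argmax (uu ^~ z) P0.
have [amin aminP Hmin] := fset_argmax (fun a => - uu a z) P0.
have [eps0 Heps] := epsP; have [cmin0 Hcmin] := cminP.
exists (uu amax z - uu amin z); split.
- by rewrite subr_ge0; have := Hmin amax amaxP; rewrite lerN2.
- move=> a a' aP a'P; have := Hmax a aP; have := Hmin a' a'P; rewrite lerN2; lra.
move=> b bN.
have Hb := Heps b bN z amax amin (uu amax z) amaxP aminP.
have Hb' : uu b z <= uu amax z + - (eps * (uu amax z - uu amin z)).
  have H1 : uu amin z <= uu amax z by have := Hmin amax amaxP; rewrite lerN2.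
  have := Hb H1 Hmax; lra.
have Eb : EE b z <= EE amax z * expR (- (eps * (uu amax z - uu amin z))).
  by rewrite /EE -expRD ler_expR.
have Hp : cmin * EE amax z <= pf z.
  apply: le_trans (pf_ge z amaxP); rewrite ler_pM2r ?EE_gt0 //; exact: Hcmin.
rewrite /rr ler_pdivrMr ?pf_gt0 //.
apply: le_trans (_ : c b * (EE amax z * expR (- (eps * (uu amax z - uu amin z)))) <= _).
  by rewrite ler_pM2l ?cN.
have -> : c b * (EE amax z * expR (- (eps * (uu amax z - uu amin z)))) =
    c b / cmin * expR (- (eps * (uu amax z - uu amin z))) * (cmin * EE amax z).
  by field; rewrite gt_eqF.
by rewrite ler_pM2l // mulr_gt0 ?expR_gt0 // divr_gt0 // cN.
Qed.


Definition Sc := \sum_(a <- P) c a.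
Definition Qt (t : R) := \sum_(b <- N) c b * t ^+ hn b.
Definition KK := ln (Sc / cmin) / eps.

Lemma EE0 a : EE a 0 = 1.
Proof. by rewrite /EE /uu dotR0r expR0. Qed.

Lemma pf0 : pf 0 = Sc.
Proof. by rewrite /pf /Sc; apply: eq_bigr => a _; rewrite EE0 mulr1. Qed.

Lemma Sc_gt0 : 0 < Sc.
Proof. by rewrite -pf0 pf_gt0. Qed.

Lemma cmin_le_Sc : cmin <= Sc.
Proof.
have [a aP] := fset0Pn _ P0; have [_ Hc] := cminP.
apply: le_trans (Hc a aP) _; rewrite /Sc.
apply: (term_le_sum (F := c)) => // b bP; exact: ltW (cP bP).
Qed.

Lemma KK_ge0 : 0 <= KK.
Proof.
have [e0 _] := epsP; have [c0 _] := cminP.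
rewrite /KK divr_ge0 //; last exact: ltW.
apply: ln_ge0; rewrite ler_pdivlMr // mul1r; exact: cmin_le_Sc.
Qed.

Lemma psi0 t : psi t 0 = Qt t / Sc.
Proof.
rewrite /psi /Qt mulr_suml; apply: eq_bigr => b _.
by rewrite /rr EE0 pf0; field; rewrite gt_eqF // Sc_gt0.
Qed.

Lemma Qt_gt0 t : 0 < t -> 0 < Qt t.
Proof.
move=> t0; have [b bN] := fset0Pn _ N0; rewrite /Qt.
apply: lt_le_trans (_ : c b * t ^+ hn b <= _).
  by rewrite mulr_gt0 ?cN ?exprn_gt0.
apply: (term_le_sum (F := fun b => c b * t ^+ hn b)) => // b' b'N.
by rewrite mulr_ge0 ?ltW ?cN ?exprn_gt0.
Qed.

Lemma big_psi t z : 0 < t -> psi t 0 <= psi t z ->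
  forall a a', a \in P -> a' \in P -> uu a z - uu a' z <= KK.
Proof.
move=> t0 H; have [D [D0 HD Hr]] := ratio_bound z.
have [e0 _] := epsP; have [c0 _] := cminP.
suff DK : D <= KK by move=> a a' aP a'P; exact: le_trans (HD a a' aP a'P) DK.
set X := expR (- (eps * D)).
have H1 : psi t z <= X / cmin * Qt t.
  rewrite /psi /Qt mulr_sumr big_seq [X in _ <= X]big_seq; apply: ler_sum => b bN.
  apply: le_trans (_ : t ^+ hn b * (c b / cmin * X) <= _).
    by apply: ler_wpM2l; [rewrite exprn_ge0 // ltW | exact: Hr].
  by apply: eqle; field; rewrite gt_eqF.
have H2 : cmin / Sc <= X.
  have h := le_trans H H1; rewrite psi0 in h.
  have Q0 := Qt_gt0 t0; have S0 := Sc_gt0.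
  have h' : Qt t / Sc * (cmin / Qt t) <= X / cmin * Qt t * (cmin / Qt t).
    by apply: ler_wpM2r => //; apply: divr_ge0; apply: ltW.
  have E1 : Qt t / Sc * (cmin / Qt t) = cmin / Sc by field; rewrite !gt_eqF.
  have E2 : X / cmin * Qt t * (cmin / Qt t) = X by field; rewrite !gt_eqF.
  by rewrite E1 E2 in h'.
rewrite leNgt; apply/negP => KD.
have : X < cmin / Sc.
  rewrite /X.
  have -> : cmin / Sc = expR (- (eps * KK)).
    have -> : eps * KK = ln (Sc / cmin) by rewrite /KK; field; rewrite gt_eqF.
    by rewrite expRN lnK ?posrE ?divr_gt0 ?Sc_gt0 // invf_div.
  by rewrite ltr_expR ltrN2 ltr_pM2l.
by rewrite ltNge H2.
Qed.

Lemma uu_hull b : b \in N -> exists l : 'rV[int]_n -> R,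
  \sum_(a <- P) l a = 1 /\ forall w, uu b w = \sum_(a <- P) l a * uu a w.
Proof.
move=> bN; have [[l [_ [l1 lb]]] _] := RI bN; exists l; split => // w.
rewrite /uu dotRC lb dotR_sumr; apply: eq_bigr => a _; by rewrite dotRZr dotRC.
Qed.

Lemma box_reduce : exists2 Bd : R, 0 <= Bd & forall z,
  (forall a a', a \in P -> a' \in P -> uu a z - uu a' z <= KK) ->
  exists z', (forall j, `|z' 0 j| <= Bd) /\ forall b, b \in N -> rr b z' = rr b z.
Proof.
have [a0 a0P] := fset0Pn _ P0.
pose s : seq 'rV[int]_n := P.
pose m := size s.
pose A : 'M[R]_(n, m) := \matrix_(j, k) (vR (nth a0 s k) 0 j - vR a0 0 j).
pose Pv := pinvmx A.
have KK0 := KK_ge0.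
exists (KK * \sum_(k < m) \sum_(j < n) `|Pv k j|).
  by apply: mulr_ge0 => //; apply: sumr_ge0 => k _; apply: sumr_ge0 => j _.
move=> z Hz.
pose z' := (z *m A) *m Pv.
have Hz' : z' *m A = z *m A := mulmxKpV (submxMl z A).
have colE (w : 'rV[R]_n) k : (w *m A) 0 k = uu (nth a0 s k) w - uu a0 w.
  rewrite mxE /uu /dotR -sumrB; apply: eq_bigr => j _; rewrite !mxE; ring.
have inv a : a \in P -> uu a z' - uu a0 z' = uu a z - uu a0 z.
  move=> aP; have ik : (index a s < m)%N by rewrite index_mem.
  have := congr1 (fun M : 'rV[R]_m => M 0 (Ordinal ik)) Hz'.
  by rewrite /= !colE nth_index.
exists z'; split.
  move=> j; rewrite mxE; apply: le_trans (ler_norm_sum _ _ _) _.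
  rewrite mulr_sumr; apply: ler_sum => k _; rewrite normrM.
  have nk : nth a0 s k \in P by apply: mem_nth.
  have yk : `|(z *m A) 0 k| <= KK.
    rewrite colE ler_norml; have := Hz _ _ nk a0P; have := Hz _ _ a0P nk; lra.
  apply: le_trans (ler_wpM2r (normr_ge0 _) yk) _.
  apply: ler_wpM2l => //.
  rewrite (bigD1 j) //= lerDl; exact: sumr_ge0.
pose d := uu a0 z' - uu a0 z.
have Ea a : a \in P -> EE a z' = EE a z * expR d.
  by move=> aP; rewrite /EE -expRD; congr expR; have := inv a aP; rewrite /d; lra.
have Pf : pf z' = pf z * expR d.
  rewrite /pf mulr_suml big_seq [RHS]big_seq; apply: eq_bigr => a aP.
  by rewrite Ea // mulrA.
move=> b bN.
have Eb : EE b z' = EE b z * expR d.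
  rewrite /EE -expRD; congr expR.
  have [l [l1 E]] := uu_hull bN.
  rewrite !E -[d]mul1r -l1 mulr_suml -big_split /= big_seq [RHS]big_seq.
  apply: eq_bigr => a aP; have := inv a aP; rewrite /d => h.
  have -> : uu a z' = uu a z + (uu a0 z' - uu a0 z) by lra.
  by ring.
rewrite /rr Pf Eb; field.
by rewrite !gt_eqF ?pf_gt0 ?expR_gt0.
Qed.

Lemma cont_sum (T : topologicalType) (I : Type) (s : seq I) (F : I -> T -> R) :
  (forall i, continuous (F i)) -> continuous (fun q => \sum_(i <- s) F i q).
Proof.
move=> HF; elim: s => [|u s IH].
  have -> : (fun q : T => \sum_(i <- [::]) F i q) = fun=> 0 by apply/funext => q; rewrite big_nil.
  exact: cst_continuous.
have -> : (fun q : T => \sum_(i <- (u :: s)) F i q) = F u + (fun q => \sum_(i <- s) F i q).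
  by apply/funext => q; rewrite big_cons.
by move=> x; apply: continuousD; [exact: HF | exact: IH].
Qed.

Lemma cont_uu a : continuous (uu a).
Proof.
have -> : uu a = (fun z => \sum_(i < n) (fun i z => vR a 0 i * z 0 i) i z) by [].
apply: cont_sum => i x.
apply: (@continuousM _ _ (fun=> vR a 0 i) (fun z : 'rV[R]_n => z 0 i)); first exact: cst_continuous.
exact: coord_continuous.
Qed.

Lemma cont_EE a : continuous (EE a).
Proof. move=> x; apply: (@continuous_comp _ _ _ (uu a) expR); [exact: cont_uu | exact: continuous_expR]. Qed.

Lemma cont_pf : continuous pf.
Proof.
apply: (cont_sum (F := fun a z => c a * EE a z)) => a x.
by apply: (@continuousM _ _ (fun=> c a) (EE a)); [exact: cst_continuous | exact: cont_EE].
Qed.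

Lemma cont_rr b : continuous (rr b).
Proof.
move=> x; apply: (@continuousM _ _ (fun z => c b * EE b z) (fun z => (pf z)^-1)).
  by apply: (@continuousM _ _ (fun=> c b) (EE b)); [exact: cst_continuous | exact: cont_EE].
by apply: (@continuousV _ _ pf); [rewrite gt_eqF ?pf_gt0 | exact: cont_pf].
Qed.

Lemma cont_psi t : continuous (psi t).
Proof.
apply: (cont_sum (F := fun b z => t ^+ hn b * rr b z)) => b x.
by apply: (@continuousM _ _ (fun=> t ^+ hn b) (rr b)); [exact: cst_continuous | exact: cont_rr].
Qed.

Definition BdQ (B : R) := 0 <= B /\ forall z,
  (forall a a', a \in P -> a' \in P -> uu a z - uu a' z <= KK) ->
  exists z', (forall j, `|z' 0 j| <= B) /\ forall b, b \in N -> rr b z' = rr b z.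
Definition Bd := xget 0 BdQ.
Lemma BdP : BdQ Bd.
Proof. apply: xgetPex; have [B B0 HB] := box_reduce; by exists B. Qed.

Definition box := [set v : 'rV[R]_n | forall i, `[- Bd, Bd]%classic (v ord0 i)].

Lemma boxP v : box v <-> forall i, `|v 0 i| <= Bd.
Proof.
split => H i; have := H i; rewrite /= in_itv /= ler_norml //.
Qed.

Lemma box0 : box 0.
Proof. by apply/boxP => i; rewrite mxE normr0; case: BdP. Qed.

Lemma box_compact : compact box.
Proof. by apply: (@rV_compact _ n (fun=> `[- Bd, Bd]%classic)) => i; exact: segment_compact. Qed.

Definition zmaxQ t z := box z /\ forall z', box z' -> psi t z' <= psi t z.
Definition zmax t := xget 0 (zmaxQ t).

Lemma zmaxP t : zmaxQ t (zmax t).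
Proof.
apply: xgetPex.
have [z zb Hz] := @EVT_max_rV R n (psi t) box (ex_intro _ 0 box0) box_compact
  (@continuous_subspaceT _ _ box (psi t) (@cont_psi t)).
exists z; split; first by rewrite -in_setE.
by move=> z' z'b; apply: Hz; rewrite in_setE.
Qed.

Definition S t := psi t (zmax t).

Lemma psi_rr t z z' : (forall b, b \in N -> rr b z' = rr b z) -> psi t z' = psi t z.
Proof.
by move=> H; rewrite /psi big_seq [RHS]big_seq; apply: eq_bigr => b bN; rewrite H.
Qed.

Lemma glob t z : 0 < t -> psi t z <= S t.
Proof.
move=> t0; have [zb zm] := zmaxP t.
case: (leP (psi t 0) (psi t z)) => H.
  have Hd := big_psi t0 H.
  have [_ HB] := BdP; have [z' [z'b z'r]] := HB z Hd.
  rewrite -(psi_rr t z'r); apply: zm; exact/boxP.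
apply: le_trans (ltW H) _; exact: zm box0.
Qed.

Lemma rr_le b z : b \in N -> rr b z <= c b / cmin.
Proof.
move=> bN; have [D [D0 _ Hr]] := ratio_bound z; apply: le_trans (Hr b bN) _.
have [e0 _] := epsP; have [c0 _] := cminP.
rewrite -[X in _ <= X]mulr1; apply: ler_wpM2l.
  by apply: divr_ge0; apply: ltW => //; exact: cN bN.
by rewrite expR_le1 oppr_le0 mulr_ge0 // ltW.
Qed.

Definition om (t s : R) := \sum_(b <- N) c b / cmin * `|s ^+ hn b - t ^+ hn b|.

Lemma psi_diff s t z : `|psi s z - psi t z| <= om t s.
Proof.
rewrite /psi /om -sumrB; apply: le_trans (ler_norm_sum _ _ _) _.
rewrite big_seq [X in _ <= X]big_seq; apply: ler_sum => b bN.
rewrite -mulrBl normrM mulrC ler_wpM2r ?normr_ge0 //.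
by rewrite ger0_norm ?rr_ge0 // rr_le.
Qed.

Lemma om_cont t : continuous (om t).
Proof.
rewrite /om; apply: (@cont_sum R _ N (fun b s => c b / cmin * `|s ^+ hn b - t ^+ hn b|)) => b x.
have H2 : {for x, continuous (fun s : R => s ^+ hn b - t ^+ hn b)}.
  have := continuousB (@exprn_continuous R (hn b) x) (@cst_continuous R R (t ^+ hn b) x).
  exact.
have H1 : {for x, continuous (fun s : R => `|s ^+ hn b - t ^+ hn b|)}.
  have := continuous_comp H2 (@norm_continuous _ R _); exact.
have H0 := @cst_continuous R R (c b / cmin) x.
have := continuousM H0 H1; exact.
Qed.

Lemma om0 t : om t t = 0.
Proof. by rewrite /om big1 // => b _; rewrite subrr normr0 mulr0. Qed.

Lemma S_cont : continuous S.
Proof.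
move=> t.
have Hf : (fun s => S t - om t s) @ t --> S t.
  have := continuousB (@cst_continuous R R (S t) t) (@om_cont t t).
  move=> H; apply: cvg_trans H _.
  have -> : ((fun=> S t) - om t) t = S t by rewrite -[LHS]/(S t - om t t) om0 subr0.
  exact: cvg_refl.
have Hh : (fun s => S t + om t s) @ t --> S t.
  have := continuousD (@cst_continuous R R (S t) t) (@om_cont t t).
  move=> H; apply: cvg_trans H _.
  have -> : ((fun=> S t) + om t) t = S t by rewrite -[LHS]/(S t + om t t) om0 addr0.
  exact: cvg_refl.
apply: (squeeze_cvgr _ Hf Hh); near=> s.
have [zbt zmt] := zmaxP t; have [zbs zms] := zmaxP s.
have d1 := psi_diff s t (zmax t); have d2 := psi_diff s t (zmax s).
have h1 := zms _ zbt; have h2 := zmt _ zbs.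
rewrite /S; apply/andP; split.
  move: d1; rewrite ler_norml => /andP[d1 _]; lra.
move: d2; rewrite ler_norml => /andP[_ d2]; lra.
Unshelve. all: by end_near.
Qed.

Lemma S_le t : 0 <= t -> S t <= \sum_(b <- N) c b / cmin * t ^+ hn b.
Proof.
move=> t0; rewrite /S /psi big_seq [X in _ <= X]big_seq; apply: ler_sum => b bN.
by rewrite mulrC ler_wpM2r ?exprn_ge0 // rr_le.
Qed.

Lemma t_ge0_S t : psi t 0 <= S t.
Proof. have [_ zm] := zmaxP t; exact: zm box0. Qed.

Lemma S_root : exists2 t0, 0 < t0 & S t0 = 1.
Proof.
have [c0 _] := cminP.
pose Cq := \sum_(b <- N) c b / cmin.
have Cq0 : 0 <= Cq.
  by rewrite /Cq big_seq; apply: sumr_ge0 => b bN; apply: divr_ge0; apply: ltW => //; exact: cN bN.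
pose t1 := (1 + 2 * Cq)^-1.
have t10 : 0 < t1 by rewrite invr_gt0; lra.
have t11 : t1 <= 1 by rewrite /t1 invf_le1; lra.
have St1 : S t1 < 1.
  apply: le_lt_trans (S_le (ltW t10)) _.
  apply: le_lt_trans (_ : Cq * t1 < 1); last first.
    have E : t1 * (1 + 2 * Cq) = 1 by rewrite /t1 mulVf // gt_eqF //; lra.
    nra.
  rewrite /Cq mulr_suml big_seq [X in _ <= X]big_seq; apply: ler_sum => b bN.
  apply: ler_wpM2l; first by apply: divr_ge0; apply: ltW => //; exact: cN bN.
  have := hN bN; case: (hn b) => // k _; rewrite exprS -[X in _ <= X]mulr1.
  by apply: ler_wpM2l; [exact: ltW | exact: exprn_ile1 (ltW t10) t11].
have [b0 b0N] := fset0Pn _ N0.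
have cb0 := cN b0N.
pose t2 := 1 + Sc / c b0.
have Sc0 := Sc_gt0.
have t21 : 1 <= t2 by rewrite /t2 lerDl divr_ge0 ?ltW.
have St2 : 1 < S t2.
  apply: lt_le_trans (t_ge0_S t2); rewrite psi0 ltr_pdivlMr // mul1r /Qt.
  apply: lt_le_trans (_ : c b0 * t2 ^+ hn b0 <= _); last first.
    apply: (term_le_sum (F := fun b => c b * t2 ^+ hn b)) => // b bN.
    by apply: mulr_ge0; [apply: ltW; exact: cN bN | apply: exprn_ge0; lra].
  apply: lt_le_trans (_ : c b0 * t2 <= _).
    rewrite /t2 mulrDr mulr1 mulrCA divff ?gt_eqF // mulr1; lra.
  apply: ler_wpM2l; first exact: ltW.
  have := hN b0N; case: (hn b0) => // k _; rewrite exprS -[X in X <= _]mulr1.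
  apply: ler_wpM2l; [lra | exact: exprn_ege1].
have t12 : t1 <= t2 by lra.
have [t0 t0in St0] := @IVT R S t1 t2 1 t12 (@continuous_subspaceT _ _ _ S S_cont)
  (ltac:(apply/andP; split; [rewrite ge_min; apply/orP; left; exact: ltW |
                             rewrite le_max; apply/orP; right; exact: ltW])).
exists t0 => //; move: t0in; rewrite in_itv /= => /andP[h _]; exact: lt_le_trans h.
Qed.

Lemma exist_crit (C : R -> 'rV[int]_n -> R) :
  (forall t a, a \in P -> C t a = c a) ->
  (forall t b, b \in N -> C t b = c b * t ^+ hn b) ->
  exists t, 0 < t /\ exists x, posvec x /\ crit_system P N (C t) x = (fun _ => 0).
Proof.
move=> CP CN; have [t0 t00 St0] := S_root.
pose zs := zmax t0; pose xs := expv zs.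
have sig_exp z : signomial P N (C t0) (expv z) = pf z * (1 - psi t0 z).
  rewrite /signomial mulrBr mulr1; congr (_ - _).
    rewrite /pf big_seq [RHS]big_seq; apply: eq_bigr => a aP.
    by rewrite CP // monom_expv.
  rewrite /psi mulr_sumr big_seq [RHS]big_seq; apply: eq_bigr => b bN.
  rewrite CN // monom_expv /rr /EE /uu; field; by rewrite gt_eqF ?pf_gt0.
have nonneg x : posvec x -> 0 <= signomial P N (C t0) x.
  move=> px; rewrite -(lnvK px) sig_exp; apply: mulr_ge0; first exact: ltW (pf_gt0 _).
  by rewrite subr_ge0 -St0 glob.
have zero : signomial P N (C t0) xs = 0 by rewrite sig_exp -/(S t0) St0 subrr mulr0.
have pxs : posvec xs := expv_pos zs.
exists t0; split => //; exists xs; split => //.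
apply/funext => k; rewrite /crit_system.
case: (unliftP ord0 k) => [i _|_] //.
pose phi := fun s : R => signomial P N (C t0) (s *: delta_mx 0 i + xs).
have xi := pxs i.
have pos s : s \in `]- xs 0 i, xs 0 i[ -> posvec (s *: delta_mx 0 i + xs).
  rewrite in_itv /= => /andP[h1 h2] j; rewrite !mxE; move: h1 h2; rewrite !mxE => h1 h2.
  case: (eqVneq i j) => [<-|ij]; first by rewrite eqxx /= mulr1; lra.
  by rewrite andbF mulr0 add0r expR_gt0.
have Hd : is_derive (0:R) (1:R) phi 0.
  apply: (@derive1_at_min R phi (- xs 0 i) (xs 0 i) 0).
  - lra.
  - move=> s sin; have [d [Hd _]] := deriv_sig P N (C t0) i (pos s sin).
    by apply/line_derivable; exact: ex_derive.
  - rewrite in_itv /=; apply/andP; split; lra.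
  - move=> s sin; rewrite /phi scale0r add0r zero; exact: nonneg (pos s sin).
have := line_derive (signomial P N (C t0)) xs (delta_mx 0 i) 0.
rewrite scale0r add0r => ->; by rewrite derive_val mulr0.
Qed.

End P6.

Unset Implicit Arguments.

Theorem theorem3p16 (R : realType) (n : nat) (Ap Am : {fset 'rV[int]_n})
  (G : set 'rV[R]_n) (c : 'rV[int]_n -> R) (h : 'rV[int]_n -> int) :
  Ap != fset0 -> Am != fset0 -> (forall a, a \in Ap -> a \notin Am) ->
  is_face_of (cvx_hull Ap) G ->
  (forall b, b \in Am -> rel_int G (vR b)) ->
  nonseparable R (restr_supp Ap G) (restr_supp Am G) ->
  (forall a, a \in (fsetU Ap Am) -> 0 < c a) ->
  lifts_neg Ap Am h ->
  exists t0 : R,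
    [set t : R | 0 < t /\ exists x : 'rV[R]_n, posvec x /\
       crit_system (restr_supp Ap G) (restr_supp Am G)
         (coef_proj (restr_supp (fsetU Ap Am) G) (coef_star c t h)) x = (fun _ => 0)]
    = [set t0].
Proof.
move=> Ap0 Am0 disj _ RIG [RI [d [_ [D [[sigma [Hs [HD _]]] [_ DN]]]]]] cpos [hAm hAp].
set P := restr_supp Ap G; set N := restr_supp Am G.
set Cf := fun t : R => coef_proj (restr_supp (fsetU Ap Am) G) (coef_star c t h).
have inP a : a \in P -> a \in Ap /\ G (vR a).
  by rewrite /P /restr_supp !inE => /andP[-> /asboolP].
have inN b : b \in N -> b \in Am /\ G (vR b).
  by rewrite /N /restr_supp !inE => /andP[-> /asboolP].
have N0 : N != fset0.
  have [b bAm] := fset0Pn _ Am0; apply/fset0Pn; exists b.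
  rewrite /N /restr_supp !inE bAm /=; apply/asboolP; by case: (RIG b bAm).
have inU a : a \in Ap \/ a \in Am -> G (vR a) -> a \in restr_supp (fsetU Ap Am) G.
  by move=> H Ga; rewrite /restr_supp !inE; apply/andP; split; [case: H => -> //; rewrite orbT | exact/asboolP].
pose hn b := `|h b|%N.
have hhn b : b \in N -> h b = (hn b)%:Z.
  by move=> bN; rewrite /hn gez0_abs // ltW // hAm //; case: (inN b bN).
have cP a : a \in P -> 0 < c a.
  by move=> aP; apply: cpos; case: (inP a aP) => aAp _; rewrite inE aAp.
have cN b : b \in N -> 0 < c b.
  by move=> bN; apply: cpos; case: (inN b bN) => bAm _; rewrite inE bAm orbT.
have hN b : b \in N -> (0 < hn b)%N.
  move=> bN; have := hAm b (proj1 (inN b bN)); rewrite (hhn b bN) //.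
have CP t a : a \in P -> Cf t a = c a.
  move=> aP; have [aAp Ga] := inP a aP.
  rewrite /Cf /coef_proj inU; [|by left|by []].
  by rewrite /coef_star (hAp a aAp) expr0z mulr1.
have CN t b : b \in N -> Cf t b = c b * t ^+ hn b.
  move=> bN; have [bAm Gb] := inN b bN.
  rewrite /Cf /coef_proj inU; [|by right|by []].
  by rewrite /coef_star (hhn b bN).
have Hcell : forall om : 'rV[int]_n -> R, exists w', forall b, b \in N ->
     @cvx_hull R n [fset a in P | `[< forall a', a' \in P ->
        om a - dotR w' (vR a) <= om a' - dotR w' (vR a') >]]%fset (vR b).
  move=> om; have [w Hw] := Hs om; exists w => b bN.
  have := DN b bN; rewrite HD /= => /(_ om); by rewrite Hw.
have [t0 [t00 [x0 [px0 Hx0]]]] := exist_crit cP cN hN N0 RI CP CN.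
exists t0; apply/seteqP; split => t /=.
  move=> [t_pos [x [px Hx]]].
  have lt_imp t1 t2 x1 x2 : 0 < t1 -> t1 < t2 -> posvec x1 ->
      crit_system P N (Cf t1) x1 = (fun _ => 0) -> posvec x2 ->
      crit_system P N (Cf t2) x2 = (fun _ => 0) -> False.
    move=> t10 t12 p1 H1 p2 H2.
    apply: (uniq_crit N0 _ _ _ _ Hcell p1 H1 p2 H2).
    - by move=> a aP; rewrite CP //; exact: cP.
    - by move=> b bN; rewrite CN // mulr_gt0 ?cN ?exprn_gt0.
    - by move=> a aP; rewrite !CP.
    - move=> b bN; rewrite !CN // ltr_pM2l ?cN // ltrXn2r ?ltW //.
      by rewrite -lt0n hN.
  case: (ltgtP t t0) => // [tt0|t0t].
    by exfalso; exact: (lt_imp t t0 x x0 t_pos tt0 px Hx px0 Hx0).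
  by exfalso; exact: (lt_imp t0 t x0 x t00 t0t px0 Hx0 px Hx).
move=> ->; split => //; exists x0; split => //.
Qed.
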